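(* Let $F$ be a complete, algebraically closed non-Archimedean valued field with absolute value $|\cdot|$, and let $f=\sum_j f_jX^j\in F[[X,X^{-1}]]$ be a non-zero Laurent series with $|f_j|\to0$ as $|j|\to\infty$. Let $k_1,k_2\in\mathbb{Z}$, not both zero, and let $B\in\mathbb{Z}_{>0}$ with $|k_1|,|k_2|\le B$. Then for any $b\in F$ with $|b|=1$, the Laurent series $$a(X):=f(X^{k_1})-bX^{k_2}$$ is either identically zero or has at most $c_fB$ zeroes (counted with multiplicity) of absolute value $1$ in $F$, where the constant $c_f$ is defined as follows: (i) if $|f|_1>1$, then $c_f=K(f,1)-k(f,1)$; (ii) if $|f|_1<1$, then $c_f=0$; (iii) if $|f|_1=1$ and $K(f,1)\neq k(f,1)$, then $c_f=2\max(|K(f,1)|,|k(f,1)|)$; (iv) if $|f|_1=1$ and $K(f,1)=k(f,1)$, then $c_f=2\max(|K(f,1)|,1)$ if $\tilde f=0$, and $c_f=2\max(|K(f,1)|,|K(\tilde f,1)|,|k(\tilde f,1)|,1)$ otherwise, where $\tilde f:=\sum_{j\neq k(f,1)} f_jX^j$.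
   Context: For a Laurent series $g=\sum_n g_nX^n$ with $|g_n|\to 0$ as $|n|\to\infty$, define $|g|_1:=\sup_{n}|g_n|$, $K(g,1):=\sup\{n\in\mathbb{Z}: |g_n|=|g|_1\}$ and $k(g,1):=\inf\{n\in\mathbb{Z}: |g_n|=|g|_1\}$ (the largest and smallest index of a coefficient of maximal absolute value). *)

(* Defs.v *)
From mathcomp Require Import all_boot all_order all_algebra.
From mathcomp Require Import boolp classical_sets reals.
Set Implicit Arguments. Unset Strict Implicit. Unset Printing Implicit Defensive.
Import Order.TTheory GRing.Theory Num.Theory.
Local Open Scope ring_scope.

Section Defs.
Variables (R : realType) (F : closedFieldType) (absF : F -> R).

Definition nonarch_abs : Prop :=
  [/\ forall x, 0 <= absF x,
      forall x, absF x = 0 <-> x = 0,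
      forall x y, absF (x * y) = absF x * absF y
    & forall x y, absF (x + y) <= Num.max (absF x) (absF y)].

Definition complete_abs : Prop :=
  forall u : nat -> F,
    (forall e : R, 0 < e -> exists N : nat, forall m n : nat,
        (N <= m)%N -> (N <= n)%N -> absF (u m - u n) < e) ->
    exists l : F, forall e : R, 0 < e -> exists N : nat, forall n : nat,
        (N <= n)%N -> absF (u n - l) < e.

(* Laurent series g = sum_n g n X^n, represented by the coefficient map *)
Definition coef_null (g : int -> F) : Prop :=
  forall e : R, 0 < e -> exists N : nat, forall n : int,
      (N <= `|n|)%N -> absF (g n) < e.

Definition norm1 (g : int -> F) : R := sup [set absF (g n) | n in [set: int]].

Definition Kidx (g : int -> F) : int :=
  xget 0 [set K : int | absF (g K) = norm1 g /\
                        forall n, absF (g n) = norm1 g -> n <= K].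

Definition kidx (g : int -> F) : int :=
  xget 0 [set k : int | absF (g k) = norm1 g /\
                        forall n, absF (g n) = norm1 g -> k <= n].

Definition ftilde (f : int -> F) : int -> F :=
  fun j => if j == kidx f then 0 else f j.

Definition cf (f : int -> F) : int :=
  if norm1 f > 1 then Kidx f - kidx f
  else if norm1 f < 1 then 0
  else if Kidx f != kidx f then 2 * Num.max `|Kidx f| `|kidx f|
  else if asbool (forall j, ftilde f j = 0) then 2 * Num.max `|Kidx f| 1
  else 2 * Num.max (Num.max `|Kidx f| `|Kidx (ftilde f)|)
                   (Num.max `|kidx (ftilde f)| 1).

Definition psum (g : int -> F) (N : nat) : F :=
  \sum_(i < (N + N).+1) g (i%:Z - N%:Z).

(* sum_j g j (the limit of the partial sums; it exists for null g in
   a complete non-Archimedean field) *)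
Definition lsum (g : int -> F) : F :=
  xget 0 [set s : F | forall e : R, 0 < e -> exists N : nat, forall n : nat,
                        (N <= n)%N -> absF (psum g n - s) < e].

(* coefficients of f(X^k1) *)
Definition comp_pow (f : int -> F) (k1 : int) : int -> F :=
  fun n => if k1 == 0 then (if n == 0 then lsum f else 0)
           else if (k1 %| n)%Z then f (n %/ k1)%Z else 0.

Definition aser (f : int -> F) (k1 k2 : int) (b : F) : int -> F :=
  fun n => comp_pow f k1 n - (if n == k2 then b else 0).

Definition mulXsub (z : F) (g : int -> F) : int -> F :=
  fun n => g (n - 1) - z * g n.

(* (X - z)^m divides a in the ring of Laurent series with null coefficients,
   i.e. z is a zero of a of multiplicity at least m *)
Definition mult_ge (a : int -> F) (z : F) (m : nat) : Prop :=
  exists g : int -> F, coef_null g /\ a = iter m (mulXsub z) g.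

End Defs.

(* Main.v *)
Require Import Defs.
From mathcomp Require Import all_boot all_order all_algebra.
From mathcomp Require Import boolp classical_sets reals.
From mathcomp Require Import zify ring lra.
Import Order.TTheory GRing.Theory Num.Theory.
Local Open Scope ring_scope.
Set Implicit Arguments. Unset Strict Implicit.

Lemma ar_span2 (p q m B : int) : `|p| <= B * m -> `|q| <= B * m ->
  Num.max p q - Num.min p q <= 2 * m * B.
Proof. move=> h1 h2; have : 2 * m * B = 2 * (B * m) by ring. lia. Qed.
Lemma ar_span3 (p q r m B : int) : `|p| <= B * m -> `|q| <= B * m -> `|r| <= B * m ->
  Num.max p (Num.max q r) - Num.min p (Num.min q r) <= 2 * m * B.
Proof. move=> h1 h2 h3; have : 2 * m * B = 2 * (B * m) by ring. lia. Qed.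
Lemma ar_abs2 (p q m B : int) : `|p| <= B * m -> `|q| <= B * m -> `|p - q| <= 2 * m * B.
Proof. move=> h1 h2; have : 2 * m * B = 2 * (B * m) by ring. lia. Qed.
Lemma ar_in2 (p q : int) : Num.min p q <= p <= Num.max p q. Proof. lia. Qed.
Lemma ar_in3 (p q r x : int) : (x == p) || (x == r) ->
  Num.min p (Num.min q r) <= x <= Num.max p (Num.max q r).
Proof. case/orP => /eqP ->; lia. Qed.
Lemma ar_out2 (n p q : int) : (n < Num.min p q) || (Num.max p q < n) -> (n != p) && (n != q).
Proof. move=> h; apply/andP; split; apply/eqP => e; move: h; rewrite e; lia. Qed.
Lemma ar_out3 (n p q r : int) : (n < Num.min p (Num.min q r)) || (Num.max p (Num.max q r) < n) -> n != p.
Proof. move=> h; apply/eqP => e; move: h; rewrite e; lia. Qed.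
Lemma ar_m1 (a b c : int) : a <= Num.max (Num.max a b) (Num.max c 1). Proof. lia. Qed.
Lemma ar_m2 (a b c : int) : b <= Num.max (Num.max a b) (Num.max c 1). Proof. lia. Qed.
Lemma ar_m3 (a b c : int) : c <= Num.max (Num.max a b) (Num.max c 1). Proof. lia. Qed.
Lemma ar_m4 (a b c : int) : 1 <= Num.max (Num.max a b) (Num.max c 1). Proof. lia. Qed.
Lemma ar_m5 (a : int) : a <= Num.max a 1. Proof. lia. Qed.
Lemma ar_m6 (a : int) : 1 <= Num.max a 1. Proof. lia. Qed.
Lemma ar_B1 (B m : int) : 0 <= B -> 1 <= m -> `|B| <= B * m.
Proof. move=> h1 h2; rewrite ger0_norm //; rewrite -{1}(mulr1 B); exact: ler_wpM2l. Qed.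
Lemma ar_Bx (B x m k1 : int) : `|k1| <= B -> `|x| <= m -> `|k1 * x| <= B * m.
Proof.
move=> h1 h2; rewrite normrM; apply: le_trans (ler_wpM2r (normr_ge0 x) h1) _.
apply: ler_wpM2l => //; exact: le_trans (normr_ge0 _) h1.
Qed.
Lemma ar_k2 (B k2 m : int) : `|k2| <= B -> 1 <= m -> `|k2| <= B * m.
Proof. move=> h1 h2; have hB : 0 <= B by exact: le_trans (normr_ge0 _) h1. apply: (le_trans h1); rewrite -{1}(mulr1 B); exact: ler_wpM2l. Qed.

Section S.
Variables (R : realType) (F : closedFieldType) (absF : F -> R).
Hypothesis Habs : nonarch_abs absF.

Lemma abs_ge0 x : 0 <= absF x. Proof. by case: Habs. Qed.
Lemma abs_eq0 x : absF x = 0 <-> x = 0. Proof. by case: Habs. Qed.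
Lemma absM x y : absF (x * y) = absF x * absF y. Proof. by case: Habs. Qed.
Lemma absD x y : absF (x + y) <= Num.max (absF x) (absF y). Proof. by case: Habs. Qed.
Lemma abs0 : absF 0 = 0. Proof. by apply/abs_eq0. Qed.
Lemma abs1 : absF 1 = 1.
Proof.
have h := absM 1 1; rewrite mulr1 in h.
have : absF 1 * (absF 1 - 1) = 0 by rewrite mulrBr mulr1 -h subrr.
move/eqP; rewrite mulf_eq0 => /orP[/eqP/abs_eq0 /eqP|]; first by rewrite oner_eq0.
by rewrite subr_eq0 => /eqP.
Qed.
Lemma absN1 : absF (-1) = 1.
Proof.
have h := absM (-1) (-1); rewrite mulrNN mulr1 abs1 in h.
have h0 := abs_ge0 (-1). nra.
Qed.
Lemma absN x : absF (- x) = absF x.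
Proof. by rewrite -mulN1r absM absN1 mul1r. Qed.
Lemma absB x y : absF (x - y) <= Num.max (absF x) (absF y).
Proof. by rewrite -(absN y) absD. Qed.
Lemma absD_lt x y : absF y < absF x -> absF (x + y) = absF x.
Proof.
move=> hyx; apply/le_anti/andP; split.
  by apply: le_trans (absD _ _) _; rewrite ge_max lexx ltW.
have := absB (x + y) y; rewrite addrK => h.
move: h; rewrite le_max => /orP[//|h]; by move: (lt_le_trans hyx h); rewrite ltxx.
Qed.
Lemma absD_lt2 x y e : absF x < e -> absF y < e -> absF (x + y) < e.
Proof. by move=> hx hy; apply: le_lt_trans (absD _ _) _; rewrite gt_max hx hy. Qed.
Lemma absB_lt2 x y e : absF x < e -> absF y < e -> absF (x - y) < e.
Proof. by move=> hx hy; apply: absD_lt2; rewrite ?absN. Qed.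
Lemma absD_le2 x y e : absF x <= e -> absF y <= e -> absF (x + y) <= e.
Proof. by move=> hx hy; apply: le_trans (absD _ _) _; rewrite ge_max hx hy. Qed.
Lemma absB_le2 x y e : absF x <= e -> absF y <= e -> absF (x - y) <= e.
Proof. by move=> hx hy; apply: absD_le2; rewrite ?absN. Qed.

Lemma abs_sum_lt (I : Type) (r : seq I) (P : pred I) (G : I -> F) e :
  0 < e -> (forall i, P i -> absF (G i) < e) -> absF (\sum_(i <- r | P i) G i) < e.
Proof.
move=> e0 h; elim/big_rec: _ => [|i x Pi hx]; first by rewrite abs0.
exact: absD_lt2 (h _ Pi) hx.
Qed.
Lemma abs_sum_le (I : Type) (r : seq I) (P : pred I) (G : I -> F) e :
  0 <= e -> (forall i, P i -> absF (G i) <= e) -> absF (\sum_(i <- r | P i) G i) <= e.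
Proof.
move=> e0 h; elim/big_rec: _ => [|i x Pi hx]; first by rewrite abs0.
exact: absD_le2 (h _ Pi) hx.
Qed.

Record dom (g : int -> F) (M : R) (K k : int) : Prop := Dom {
  dM : 0 < M; dle : forall n, absF (g n) <= M; dK : absF (g K) = M; dk : absF (g k) = M;
  dgtK : forall n, K < n -> absF (g n) < M; dltk : forall n, n < k -> absF (g n) < M }.

Lemma dom_kK g M K k : dom g M K k -> k <= K.
Proof.
case=> M0 _ hK hk hgt _; rewrite leNgt; apply/negP => /hgt; by rewrite hk ltxx.
Qed.

Lemma dom_step z h M K k : absF z = 1 -> dom h M K k -> dom (mulXsub z h) M (K + 1) k.
Proof.
move=> hz [M0 hle hK hk hgt hlt]; rewrite /mulXsub; split => //.
- move=> n; apply: absB_le2 => //; by rewrite absM hz mul1r.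
- rewrite addrK absD_lt hK //; rewrite absN absM hz mul1r; apply: hgt; lia.
- rewrite addrC absD_lt ?absN absM hz mul1r ?hk //; apply: hlt; lia.
- move=> n hn; apply: absB_lt2; first by apply: hgt; lia.
  by rewrite absM hz mul1r; apply: hgt; lia.
- move=> n hn; apply: absB_lt2; first by apply: hlt; lia.
  by rewrite absM hz mul1r; apply: hlt; lia.
Qed.

Lemma dom_uniq g M K k M' K' k' : dom g M K k -> dom g M' K' k' ->
  [/\ M = M', K = K' & k = k'].
Proof.
move=> [M0 hle hK hk hgt hlt] [M0' hle' hK' hk' hgt' hlt'].
have eM : M = M' by apply/le_anti; rewrite -{1}hK -{2}hK' hle hle'.
rewrite -eM in hK' hk' hgt' hlt'; split => //.
- case: (ltgtP K K') => // h; [move: (hgt _ h)|move: (hgt' _ h)];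
  by rewrite ?hK ?hK' ltxx.
- case: (ltgtP k k') => // h; [move: (hlt' _ h)|move: (hlt _ h)];
  by rewrite ?hk ?hk' ltxx.
Qed.

Lemma null_mulX z h : absF z = 1 -> coef_null absF h -> coef_null absF (mulXsub z h).
Proof.
move=> hz hn e e0; have [N hN] := hn e e0; exists N.+1 => n hnN.
rewrite /mulXsub; apply: absB_lt2; first by apply: hN; lia.
by rewrite absM hz mul1r; apply: hN; lia.
Qed.

Lemma null_lin (c : F) g h : coef_null absF g -> coef_null absF h ->
  coef_null absF (fun n => c * (h n - g n)).
Proof.
move=> hg hh e e0.
have c1 : 0 < absF c + 1 by have := abs_ge0 c; lra.
have e1 : 0 < e / (absF c + 1) by apply: divr_gt0.
have [N1 h1] := hg _ e1; have [N2 h2] := hh _ e1.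
exists (maxn N1 N2) => n hn; rewrite absM.
have hb : absF (h n - g n) < e / (absF c + 1).
  by apply: absB_lt2; [apply: h2|apply: h1]; lia.
have := abs_ge0 c; have := abs_ge0 (h n - g n) => ha hc.
rewrite ltr_pdivlMr // in hb.
nra.
Qed.

Lemma null_P zs g : all (fun z => absF z == 1) zs -> coef_null absF g ->
  coef_null absF (foldr (@mulXsub F) g zs).
Proof.
elim: zs => //= z zs IH /andP[/eqP hz hzs] hg; exact: null_mulX hz (IH hzs hg).
Qed.

Lemma mulX_comm (z w : F) g : mulXsub z (mulXsub w g) = mulXsub w (mulXsub z g).
Proof. apply: funext => n; rewrite /mulXsub; ring. Qed.

Lemma P_comm zs w g : foldr (@mulXsub F) (mulXsub w g) zs = mulXsub w (foldr (@mulXsub F) g zs).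
Proof. by elim: zs => //= z zs ->; rewrite mulX_comm. Qed.

Lemma P_cat zs ts g : foldr (@mulXsub F) g (ts ++ zs) = foldr (@mulXsub F) (foldr (@mulXsub F) g zs) ts.
Proof. by rewrite foldr_cat. Qed.

Lemma P_comm2 zs ts g : foldr (@mulXsub F) (foldr (@mulXsub F) g ts) zs =
  foldr (@mulXsub F) (foldr (@mulXsub F) g zs) ts.
Proof.
elim: ts => //= t ts IH; by rewrite P_comm IH.
Qed.

Lemma iter_P m z g : iter m (mulXsub z) g = foldr (@mulXsub F) g (nseq m z).
Proof. by elim: m => //= m ->. Qed.

Lemma mulX_cancel w u : absF w = 1 -> coef_null absF u -> mulXsub w u = (fun _ => 0) -> u = (fun _ => 0).
Proof.
move=> hw hn hu; apply: funext => n0; apply/eqP; apply/negPn/negP => hne.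
have step : forall n, absF (u n) = absF (u (n + 1)).
  move=> n; have := congr1 (fun f => f (n + 1)) hu; rewrite /mulXsub addrK => /eqP.
  by rewrite subr_eq0 => /eqP ->; rewrite absM hw mul1r.
have hj : forall j : nat, absF (u (n0 + j%:Z)) = absF (u n0).
  elim=> [|j IH]; first by rewrite addr0.
  rewrite -IH [RHS]step -addrA; congr (absF (u (n0 + _))); lia.
have e0 : 0 < absF (u n0).
  rewrite lt_neqAle abs_ge0 andbT eq_sym; apply/eqP => /abs_eq0; exact/eqP.
have [N hN] := hn _ e0.
have h1 : (N <= `|(n0 + (absz n0 + N)%N%:Z)%R|)%N by lia.
by move: (hN _ h1); rewrite hj ltxx.
Qed.

Lemma div_step (z w : F) (g h : int -> F) : z != w -> mulXsub z g = mulXsub w h ->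
  g = mulXsub w (fun n => (w - z)^-1 * (h n - g n)).
Proof.
move=> hzw e; apply: funext => n; rewrite /mulXsub.
have := congr1 (fun f => f n) e; rewrite /mulXsub => en.
have -> : h (n - 1) = g (n - 1) - z * g n + w * h n by rewrite en; ring.
have hwz : w - z != 0 by rewrite subr_eq0 eq_sym.
field. exact: hwz.
Qed.

Definition abs1s (zs : seq F) := all (fun z => absF z == 1) zs.

Lemma nseq_abs1 n w : absF w = 1 -> abs1s (nseq n w).
Proof. by move=> hw; apply/allP => x /nseqP[-> _]; rewrite hw. Qed.

Lemma div_P zs w g h : w \notin zs -> abs1s zs -> coef_null absF g -> coef_null absF h ->
  foldr (@mulXsub F) g zs = mulXsub w h ->
  exists g2, coef_null absF g2 /\ g = mulXsub w g2.
Proof.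
elim: zs h => [|z zs IH] h /=; first by move=> *; exists h.
rewrite in_cons negb_or => /andP[hwz hw] /andP[_ hzs] hg hh e.
have hzw : z != w by rewrite eq_sym.
have := div_step hzw e => e2.
apply: (IH _ hw hzs hg _ e2).
apply: null_lin => //; exact: null_P.
Qed.

Lemma div_Pn n zs w g h : w \notin zs -> abs1s zs -> absF w = 1 ->
  coef_null absF g -> coef_null absF h ->
  foldr (@mulXsub F) g zs = foldr (@mulXsub F) h (nseq n w) ->
  exists g2, coef_null absF g2 /\ g = foldr (@mulXsub F) g2 (nseq n w).
Proof.
move=> hw hzs hw1; elim: n g h => [|n IH] g h hg hh e; first by exists g.
move: e => /= e.
have hnh : coef_null absF (foldr (@mulXsub F) h (nseq n w)) by apply: null_P => //; exact: nseq_abs1.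
have [g1 [hg1 eg1]] := div_P hw hzs hg hnh e.
move: e; rewrite eg1 P_comm => e.
have eu : foldr (@mulXsub F) g1 zs = foldr (@mulXsub F) h (nseq n w).
  have hu := @mulX_cancel w (fun t => 1 * (foldr (@mulXsub F) h (nseq n w) t -
     foldr (@mulXsub F) g1 zs t)) hw1.
  have := hu (null_lin 1 (null_P hzs hg1) hnh).
  have -> : mulXsub w (fun n0 => 1 * (foldr (@mulXsub F) h (nseq n w) n0 -
     foldr (@mulXsub F) g1 zs n0)) = (fun _ => 0).
    apply: funext => k; have := congr1 (fun f => f k) e; rewrite /mulXsub.
    set A := foldr _ h _; set B := foldr _ g1 _ => ek.
    have -> : 1 * (A (k - 1) - B (k - 1)) - w * (1 * (A k - B k)) =
      (A (k - 1) - w * A k) - (B (k - 1) - w * B k) by ring.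
    by rewrite ek subrr.
  move=> /(_ erefl) h0; apply: funext => k; have := congr1 (fun f => f k) h0 => /= /eqP.
  by rewrite mul1r subr_eq0 => /eqP ->.
have [g2 [hg2 eg2]] := IH g1 h hg1 hh eu.
by exists g2; split => //; rewrite eg2.
Qed.

Lemma dom_P zs g M K k : abs1s zs -> dom g M K k ->
  dom (foldr (@mulXsub F) g zs) M (K + (size zs)%:Z) k.
Proof.
elim: zs => [|z zs IH] /=; first by rewrite addr0.
move=> /andP[/eqP hz hzs] hd.
have := dom_step hz (IH hzs hd).
by have -> : K + (size zs).+1%:Z = K + (size zs)%:Z + 1 by lia.
Qed.

Lemma factor (a : int -> F) (m : F -> nat) z0 s : uniq (z0 :: s) ->
  (forall z, z \in z0 :: s -> absF z = 1 /\ mult_ge absF a z (m z)) ->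
  exists zs g, [/\ coef_null absF g, a = foldr (@mulXsub F) g zs,
    size zs = (\sum_(z <- z0 :: s) m z)%N, abs1s zs & (forall x, x \in zs -> x \in z0 :: s)].
Proof.
elim: s => [|x s IH] hu hyp.
  have [h0 [g [hg ea]]] := hyp z0 (mem_head _ _).
  exists (nseq (m z0) z0), g; split => //.
  - by rewrite -iter_P.
  - by rewrite size_nseq big_seq1.
  - exact: nseq_abs1.
  - by move=> y /nseqP[-> _]; rewrite mem_head.
have hu' : uniq (z0 :: s).
  move: hu => /= /andP[]; rewrite in_cons negb_or => /andP[_ ->] /andP[_ ->] //.
have hyp' : forall z, z \in z0 :: s -> absF z = 1 /\ mult_ge absF a z (m z).
  move=> z hz; apply: hyp; move: hz; rewrite !in_cons; by case/orP => ->; rewrite ?orbT.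
have [zs [g [hg ea hsz hzs hin]]] := IH hu' hyp'.
have hxs : x \notin z0 :: s.
  move: hu => /= /andP[]; rewrite in_cons negb_or => /andP[h1 _] /andP[h2 _].
  by rewrite in_cons negb_or h2 eq_sym h1.
have hxzs : x \notin zs by apply/negP => /hin; exact/negP.
have [hx1 [h [hh eh]]] := hyp x ltac:(by rewrite !in_cons eqxx orbT).
rewrite iter_P ea in eh.
have [g2 [hg2 eg2]] := div_Pn hxzs hzs hx1 hg hh eh.
exists (zs ++ nseq (m x) x), g2; split => //.
- by rewrite foldr_cat -eg2.
- rewrite size_cat size_nseq hsz !big_cons; lia.
- by rewrite /abs1s all_cat; apply/andP; split => //; exact: nseq_abs1.
- move=> y; rewrite mem_cat => /orP[/hin|/nseqP[-> _]]; rewrite !in_cons.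
    by move=> /orP[->|->] //; rewrite !orbT.
  by rewrite eqxx orbT.
Qed.

Lemma dom_exists g : coef_null absF g -> (exists n, g n != 0) -> exists M K k, dom g M K k.
Proof.
move=> hn [n0 hn0].
have e0 : 0 < absF (g n0).
  rewrite lt_neqAle abs_ge0 andbT eq_sym; apply/eqP => /abs_eq0; exact/eqP.
have [N hN] := hn _ e0.
have hn0N : (`|n0| < N)%N.
  rewrite ltnNge; apply/negP => /hN; by rewrite ltxx.
pose idx (i : 'I_(N+N).+1) : int := (i : nat)%:Z - N%:Z.
have hidx : forall n, (`|n| < N)%N -> exists i : 'I_(N+N).+1, idx i = n.
  move=> n hn'; exists (inord (absz (n + N%:Z))); rewrite /idx inordK; lia.
have [i0 hi0] := hidx n0 hn0N.
pose G i := absF (g (idx i)).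
case: (@arg_maxP _ _ _ i0 predT G isT) => im _ him.
set M := G im.
have hge : absF (g n0) <= M by rewrite -hi0; exact: him.
have hM : forall n, absF (g n) <= M.
  move=> n; case: (ltnP `|n| N) => h.
    by have [i <-] := hidx n h; exact: him.
  exact: le_trans (ltW (hN _ h)) hge.
have hbig : forall n, absF (g n) = M -> (`|n| < N)%N.
  move=> n hnM; rewrite ltnNge; apply/negP => /hN; rewrite hnM => h.
  by move: (lt_le_trans h hge); rewrite ltxx.
have PM : [pred i | G i == M] im by rewrite /= eqxx.
case: (@arg_maxP _ _ _ im [pred i | G i == M] (fun i => nat_of_ord i) PM) => iK /eqP hK himK.
case: (@arg_minP _ _ _ im [pred i | G i == M] (fun i => nat_of_ord i) PM) => ik /eqP hk himk.
exists M, (idx iK), (idx ik); split => //.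
- exact: lt_le_trans e0 hge.
- move=> n hn'; rewrite lt_neqAle hM andbT; apply/eqP => hnM.
  have [j hj] := hidx n (hbig _ hnM).
  have := himK j; rewrite /= /G hj hnM eqxx => /(_ isT); rewrite /idx in hj hn' *; lia.
- move=> n hn'; rewrite lt_neqAle hM andbT; apply/eqP => hnM.
  have [j hj] := hidx n (hbig _ hnM).
  have := himk j; rewrite /= /G hj hnM eqxx => /(_ isT); rewrite /idx in hj hn' *; lia.
Qed.

Lemma norm1_dom g M K k : dom g M K k -> norm1 absF g = M.
Proof.
case=> M0 hle hK hk _ _; rewrite /norm1; apply/le_anti/andP; split.
  apply: ge_sup; first by exists (absF (g K)), K.
  by move=> x [n _ <-].
have hub : has_ubound [set absF (g n) | n in [set: int]].
  by exists M => x [n _ <-].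
by have := ub_le_sup hub; apply; exists K; rewrite ?hK.
Qed.

Lemma Kidx_dom g M K k : dom g M K k -> Kidx absF g = K.
Proof.
move=> hd; have hn := norm1_dom hd; case: hd => M0 hle hK hk hgt hlt.
rewrite /Kidx hn; apply: xget_unique.
  split => // n hnM; rewrite leNgt; apply/negP => /hgt; by rewrite hnM ltxx.
move=> y [hy hyK]; apply/le_anti/andP; split; last exact: hyK.
rewrite leNgt; apply/negP => hKy; have := hgt _ hKy; by rewrite hy ltxx.
Qed.

Lemma kidx_dom g M K k : dom g M K k -> kidx absF g = k.
Proof.
move=> hd; have hn := norm1_dom hd; case: hd => M0 hle hK hk hgt hlt.
rewrite /kidx hn; apply: xget_unique.
  split => // n hnM; rewrite leNgt; apply/negP => /hlt; by rewrite hnM ltxx.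
move=> y [hy hyK]; apply/le_anti/andP; split; first exact: hyK.
rewrite leNgt; apply/negP => hKy; have := hlt _ hKy; by rewrite hy ltxx.
Qed.

Lemma dom_interval a M K k L U n0 : dom a M K k -> L <= n0 <= U ->
  (forall n, (n < L) || (U < n) -> absF (a n) < absF (a n0)) -> L <= k /\ K <= U.
Proof.
case=> M0 hle hK hk _ _ /andP[hL hU] hout; split.
  rewrite leNgt; apply/negP => h; have := hout k; rewrite h /= hk => /(_ isT) h2.
  by move: (lt_le_trans h2 (hle n0)); rewrite ltxx.
rewrite leNgt; apply/negP => h; have := hout K; rewrite h orbT hK => /(_ isT) h2.
by move: (lt_le_trans h2 (hle n0)); rewrite ltxx.
Qed.

Lemma psum_step (g : int -> F) p :
  psum g p.+1 = psum g p + g (p.+1%:Z) + g (- p.+1%:Z).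
Proof.
rewrite /psum.
have -> : (p.+1 + p.+1).+1 = ((p + p).+1).+2 by lia.
rewrite big_ord_recr big_ord_recl /=.
have -> : \sum_(i < (p + p).+1) g ((lift ord0 (widen_ord (leqnSn _) i) : nat)%:Z - p.+1%:Z)
   = \sum_(i < (p + p).+1) g (i%:Z - p%:Z).
  by apply: eq_bigr => i _; rewrite /= /bump /=; congr (g _); lia.
have -> : (((p + p).+2 : nat)%:Z - p.+1%:Z) = p.+1%:Z by lia.
have -> : ((0%N : nat)%:Z - p.+1%:Z) = - p.+1%:Z by lia.
ring.
Qed.

Lemma psum_cauchy g e : coef_null absF g -> 0 < e -> exists N : nat, forall m n : nat,
  (N <= m)%N -> (N <= n)%N -> absF (psum g m - psum g n) < e.
Proof.
move=> hn e0; have [N hN] := hn e e0; exists N.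
have key : forall n d, (N <= n)%N -> absF (psum g (n + d) - psum g n) < e.
  move=> n d hnN; elim: d => [|d IH]; first by rewrite addn0 subrr abs0.
  rewrite addnS psum_step.
  have -> : psum g (n + d) + g (n + d).+1%:Z + g (- (n + d).+1%:Z) - psum g n =
     (g (n + d).+1%:Z + g (- (n + d).+1%:Z)) + (psum g (n + d) - psum g n) by ring.
  apply: absD_lt2 => //; apply: absD_lt2; apply: hN; lia.
move=> m n hm hn'; case: (leqP n m) => h.
  by have := key n (m - n)%N hn'; rewrite subnKC.
have := key m (n - m)%N hm; rewrite subnKC ?(ltnW h) // => h2.
by rewrite -absN opprB.
Qed.

Hypothesis Hcomp : complete_abs absF.

Lemma lsum_spec g : coef_null absF g -> forall e : R, 0 < e -> exists N : nat, forall n : nat,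
    (N <= n)%N -> absF (psum g n - lsum absF g) < e.
Proof.
move=> hn; rewrite /lsum; apply: (@xgetPex _ 0 (fun s => forall e : R, 0 < e -> exists N : nat, forall n : nat,
    (N <= n)%N -> absF (psum g n - s) < e)).
apply: Hcomp => e e0; exact: psum_cauchy.
Qed.

Lemma psum_le g M K k p : dom g M K k -> absF (psum g p) <= M.
Proof. by case=> M0 hle _ _ _ _; apply: abs_sum_le => //; exact: ltW. Qed.

Lemma psum_single g M K p : dom g M K K -> (`|K| <= p)%N -> absF (psum g p) = M.
Proof.
case=> M0 hle hK _ hgt hlt hp; rewrite /psum.
have hi : (absz (K + p%:Z)%R < (p + p).+1)%N by lia.
rewrite (bigD1 (Ordinal hi)) //= absD_lt.
  by have -> : ((absz (K + p%:Z))%:Z - p%:Z) = K by lia.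
have -> : absF (g ((absz (K + p%:Z))%:Z - p%:Z)) = M.
  by have -> : ((absz (K + p%:Z))%:Z - p%:Z) = K by lia.
apply: abs_sum_lt => // i hiK.
have hne : (i : nat) != absz (K + p%:Z) by apply: contra hiK => /eqP h; apply/eqP/val_inj.
case: (ltgtP (i%:Z - p%:Z) K) => h.
- exact: hlt.
- exact: hgt.
- exfalso; move/eqP: hne; apply; lia.
Qed.

Lemma lsum_le g M K k : coef_null absF g -> dom g M K k -> absF (lsum absF g) <= M.
Proof.
move=> hn hd; have M0 := dM hd; have [N hN] := lsum_spec hn M0.
have h1 := hN N (leqnn N); have h2 := psum_le N hd.
have -> : lsum absF g = psum g N - (psum g N - lsum absF g) by ring.
by apply: absB_le2 => //; exact: ltW.
Qed.

Lemma lsum_single g M K : coef_null absF g -> dom g M K K -> absF (lsum absF g) = M.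
Proof.
move=> hn hd; have M0 := dM hd; have [N hN] := lsum_spec hn M0.
have h1 := hN (maxn N `|K|) (leq_maxl _ _).
have h2 := psum_single hd (leq_maxr N `|K|).
have -> : lsum absF g = psum g (maxn N `|K|) + - (psum g (maxn N `|K|) - lsum absF g) by ring.
by rewrite absD_lt h2 // absN.
Qed.

Lemma cp_mul f k1 j : k1 != 0 -> comp_pow absF f k1 (k1 * j) = f j.
Proof.
move=> hk; rewrite /comp_pow (negbTE hk) dvdz_mulr ?dvdzz // mulKz //.
Qed.

Lemma cp_cases f k1 n : k1 != 0 -> comp_pow absF f k1 n = 0 \/
  exists j, n = k1 * j /\ comp_pow absF f k1 n = f j.
Proof.
move=> hk; rewrite /comp_pow (negbTE hk); case: ifP => h; last by left.
by right; exists (n %/ k1)%Z; split => //; rewrite mulrC divzK.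
Qed.

Lemma span_gen a M K k L U n0 : dom a M K k -> L <= n0 <= U ->
  (forall n, (n < L) || (U < n) -> absF (a n) < absF (a n0)) -> K - k <= U - L.
Proof. move=> hd hn hout; have [h1 h2] := dom_interval hd hn hout; lia. Qed.

Lemma one_point a M K k p : dom a M K k ->
  (forall n, n != p -> absF (a n) < absF (a p)) -> K - k <= 0.
Proof.
move=> hd hout; have := @span_gen a M K k p p p hd.
rewrite lexx subrr; apply => // n hn; apply: hout; lia.
Qed.

Lemma abs_pos x : x != 0 -> 0 < absF x.
Proof. move=> hx; rewrite lt_neqAle abs_ge0 andbT eq_sym; apply/eqP => /abs_eq0; exact/eqP. Qed.

Lemma two_point a M K k p q : dom a M K k ->
  (forall n, n != p -> n != q -> a n = 0) -> K - k <= `|p - q|.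
Proof.
move=> hd h0.
have hne : exists2 n0, (n0 == p) || (n0 == q) & a n0 != 0.
  case: (eqVneq (a p) 0) => hp; last by exists p; rewrite ?eqxx.
  case: (eqVneq (a q) 0) => hq; last by exists q; rewrite ?eqxx ?orbT.
  exfalso; have hK := dK hd; have M0 := dM hd.
  have : a K = 0.
    case: (eqVneq K p) => [->//|h1]; case: (eqVneq K q) => [->//|h2]; exact: h0.
  by move=> e; move: M0; rewrite -hK e abs0 ltxx.
case: hne => n0 hn0 hnz.
have := @span_gen a M K k (Num.min p q) (Num.max p q) n0 hd.
have h1 : Num.min p q <= n0 <= Num.max p q.
  by case/orP: hn0 => /eqP ->; lia.
move=> /(_ h1) h; have : K - k <= Num.max p q - Num.min p q.
  apply: h => n hn; rewrite h0 ?abs0 ?abs_pos //; lia.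
lia.
Qed.

Lemma absBb c b : absF b = 1 -> absF c < 1 -> absF (c - b) = 1.
Proof. by move=> hb hc; rewrite addrC absD_lt absN // hb. Qed.
Lemma absBb' c b : absF b = 1 -> 1 < absF c -> absF (c - b) = absF c.
Proof. by move=> hb hc; rewrite absD_lt // absN hb. Qed.
Lemma absBb_le c b e : absF b = 1 -> absF c <= e -> 1 <= e -> absF (c - b) <= e.
Proof. by move=> hb hc he; apply: absB_le2 => //; rewrite hb. Qed.
Lemma absBb_lt c b e : absF b = 1 -> absF c < e -> 1 < e -> absF (c - b) < e.
Proof. by move=> hb hc he; apply: absB_lt2 => //; rewrite hb. Qed.

Lemma bound0 f k2 b B M K k Ma Ka ka :
  coef_null absF f -> dom f M K k -> k2 != 0 -> `|k2| <= B%:Z -> absF b = 1 ->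
  dom (aser absF f 0 k2 b) Ma Ka ka -> Ka - ka <= cf absF f * B%:Z.
Proof.
move=> hnu hf hk2 hB hb ha.
have hkK := dom_kK hf.
have eL : forall n, comp_pow absF f 0 n = if n == 0 then lsum absF f else 0.
  by move=> n; rewrite /comp_pow eqxx.
have hsp : Ka - ka <= `|0 - k2| by apply: (two_point ha) => n h1 h2;
  rewrite /aser eL (negbTE h1) (negbTE h2) subrr.
rewrite /cf (norm1_dom hf) (Kidx_dom hf) (kidx_dom hf).
case: ifP => hM1.
  case: (eqVneq K k) => hKk; last by nia.
  subst k; have hone : Ka - ka <= 0.
    apply: (one_point (p:=0) ha) => n hn.
    have hk2' : (0 == k2) = false by rewrite eq_sym (negbTE hk2).
    rewrite /aser !eL (negbTE hn) eqxx hk2' subr0 (lsum_single hnu hf).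
    case: eqP => _; rewrite sub0r ?absN ?hb ?subr0 ?abs0 //; exact: lt_trans ltr01 hM1.
  by rewrite subrr mul0r.
case: ifP => hM2.
  rewrite mul0r; apply: (one_point (p:=k2) ha) => n hn.
  rewrite /aser !eL (negbTE hn) eqxx (negbTE hk2) sub0r absN hb subr0.
  case: eqP => _; last by rewrite abs0 ltr01.
  exact: le_lt_trans (lsum_le hnu hf) hM2.
have hc : 1 <= (if K != k then 2 * Num.max `|K| `|k|
   else if asbool (forall j, ftilde absF f j = 0) then 2 * Num.max `|K| 1
   else 2 * Num.max (Num.max `|K| `|Kidx absF (ftilde absF f)|) (Num.max `|kidx absF (ftilde absF f)| 1)).
  by case: ifP => h1; [|case: ifP => h2]; lia.
nia.
Qed.

Lemma between (k1 j k K : int) : k <= j <= K -> Num.min (k1*k) (k1*K) <= k1*j <= Num.max (k1*k) (k1*K).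
Proof.
move=> /andP[h1 h2]; case: (lerP 0 k1) => hk.
  have := ler_wpM2l hk h1; have := ler_wpM2l hk h2; lia.
have hk' : k1 <= 0 by exact: ltW.
have := ler_wnM2l hk' h1; have := ler_wnM2l hk' h2; lia.
Qed.
Lemma mulB (k1 x B : int) : `|k1| <= B -> `|k1 * x| <= B * `|x|.
Proof. move=> h; rewrite normrM; apply: ler_wpM2r => //. Qed.
Lemma neqM (k1 x y : int) : k1 != 0 -> x != y -> k1 * x != k1 * y.
Proof. move=> h1 h2; by rewrite (inj_eq (mulfI h1)). Qed.

Lemma cp_le f k1 M K k n : k1 != 0 -> dom f M K k -> absF (comp_pow absF f k1 n) <= M.
Proof.
move=> hk hf; case: (cp_cases f n hk) => [->|[j [_ ->]]]; last exact: dle hf _.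
by rewrite abs0 ltW // (dM hf).
Qed.

Lemma cp_out f k1 M K k n L U : k1 != 0 -> dom f M K k ->
  L <= Num.min (k1*k) (k1*K) -> Num.max (k1*k) (k1*K) <= U -> (n < L) || (U < n) ->
  absF (comp_pow absF f k1 n) < M.
Proof.
move=> hk hf hL hU hn; case: (cp_cases f n hk) => [->|[j [ej ->]]].
  by rewrite abs0 (dM hf).
case: (ltP j k) => h1; first exact: dltk hf _ h1.
case: (ltP K j) => h2; first exact: dgtK hf _ h2.
have := @between k1 j k K; rewrite h1 h2 => /(_ isT); lia.
Qed.

Lemma bound1 f k1 k2 b B M K k Ma Ka ka :
  coef_null absF f -> dom f M K k -> k1 != 0 -> `|k1| <= B%:Z -> `|k2| <= B%:Z -> absF b = 1 ->
  dom (aser absF f k1 k2 b) Ma Ka ka -> Ka - ka <= cf absF f * B%:Z.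
Proof.
move=> hnu hf hk1 hB1 hB2 hb ha.
have hkK := dom_kK hf.
have M0 := dM hf.
set c := comp_pow absF f k1.
have ea : forall n, aser absF f k1 k2 b n = c n - (if n == k2 then b else 0) by [].
have hcle : forall n, absF (c n) <= M by move=> n; exact: cp_le hk1 hf.
have mK := mulB K hB1; have mk := mulB k hB1.
rewrite /cf (norm1_dom hf) (Kidx_dom hf) (kidx_dom hf).
case: ifP => hM1.
  have hn0 : absF (aser absF f k1 k2 b (k1 * K)) = M.
    rewrite ea /c cp_mul //; case: eqP => _; last by rewrite subr0 (dK hf).
    by rewrite absBb' // (dK hf).
  apply: le_trans (@span_gen _ _ _ _ (Num.min (k1*k) (k1*K)) (Num.max (k1*k) (k1*K)) (k1 * K) ha _ _) _.
  - lia.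
  - move=> n hn; rewrite hn0 ea.
    have h := cp_out hk1 hf (lexx _) (lexx _) hn.
    case: eqP => _; last by rewrite subr0.
    by apply: absBb_lt.
  - have e : Num.max (k1 * k) (k1 * K) - Num.min (k1 * k) (k1 * K) = `|k1| * (K - k).
      case: (lerP 0 k1) => hs.
        by rewrite ger0_norm // mulrBr; have := ler_wpM2l hs hkK; lia.
      have hs' : k1 <= 0 by exact: ltW.
      by rewrite ltr0_norm // mulrBr; have := ler_wnM2l hs' hkK; lia.
    rewrite e mulrC; apply: ler_wpM2l => //; lia.
case: ifP => hM2.
  rewrite mul0r; apply: (one_point (p:=k2) ha) => n hn.
  rewrite !ea eqxx (negbTE hn) subr0 absBb //; last exact: le_lt_trans (hcle _) hM2.
  exact: le_lt_trans (hcle _) hM2.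
have hM : M = 1 by apply/eqP; rewrite eq_le !leNgt hM1 hM2.
subst M.
case: (eqVneq K k) => hKk; last first.
  set n0 := if k1 * K != k2 then k1 * K else k1 * k.
  have hn0k2 : n0 != k2.
    rewrite /n0; case: ifP => // /negbFE /eqP <-; apply: neqM => //; by rewrite eq_sym.
  have hn0 : absF (aser absF f k1 k2 b n0) = 1.
    rewrite ea (negbTE hn0k2) subr0 /n0; case: ifP => _; rewrite /c cp_mul //.
      exact: (dK hf).
    exact: (dk hf).
  apply: le_trans (@span_gen _ _ _ _ (Num.min k2 (Num.min (k1*k) (k1*K)))
     (Num.max k2 (Num.max (k1*k) (k1*K))) n0 ha _ _) _.
  - rewrite /n0; case: ifP => _; lia.
  - move=> n hn; rewrite hn0 ea.
    have h := cp_out (L := Num.min k2 (Num.min (k1*k) (k1*K)))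
                     (U := Num.max k2 (Num.max (k1*k) (k1*K))) hk1 hf ltac:(lia) ltac:(lia) hn.
    case: eqP => hnk2; first by exfalso; move: hn; rewrite hnk2; lia.
    by rewrite subr0.
  - have hmax : 1 <= Num.max `|K| `|k| by lia.
    have : Num.max k2 (Num.max (k1 * k) (k1 * K)) - Num.min k2 (Num.min (k1 * k) (k1 * K))
      <= 2 * (B%:Z * Num.max `|K| `|k|).
      have hBm : B%:Z <= B%:Z * Num.max `|K| `|k|.
        by rewrite -{1}(mulr1 B%:Z); apply: ler_wpM2l => //; lia.
      have h1 : B%:Z * `|K| <= B%:Z * Num.max `|K| `|k| by apply: ler_wpM2l => //; lia.
      have h2 : B%:Z * `|k| <= B%:Z * Num.max `|K| `|k| by apply: ler_wpM2l => //; lia.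
      lia.
    rewrite /=; lia.
subst k; rewrite /=.
have hft : forall j, ftilde absF f j = if j == K then 0 else f j.
  by move=> j; rewrite /ftilde (kidx_dom hf).
have hfK : absF (f K) = 1 := dK hf.
have hfj : forall j, j != K -> absF (f j) < 1.
  move=> j hj; case: (ltgtP j K) => h; [exact: dltk hf _ h|exact: dgtK hf _ h|by rewrite h eqxx in hj].
case: asboolP => hall.
  have := @two_point _ _ _ _ (k1 * K) k2 ha.
  have h0 : forall n, n != k1 * K -> n != k2 -> aser absF f k1 k2 b n = 0.
    move=> n hn1 hn2; rewrite ea (negbTE hn2) subr0.
    rewrite /c; case: (cp_cases f n hk1) => [//|[j [ej ->]]].
    have hjK : j != K by apply: contra hn1 => /eqP hj; by rewrite ej hj.
    by have := hall j; rewrite hft (negbTE hjK).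
  move=> /(_ h0) h; apply: le_trans h _; apply: ar_abs2.
    by apply: ar_Bx => //; exact: ar_m5.
  by apply: ar_k2 => //; exact: ar_m6.
have [j0 hj0] : exists j, ftilde absF f j != 0.
  case: (pselect (exists j, ftilde absF f j != 0)) => // hno; exfalso; apply: hall => j.
  by apply/eqP/negPn/negP => hne; apply: hno; exists j.
have hnft : coef_null absF (ftilde absF f).
  move=> e e0; have [N hN] := hnu e e0; exists N => n hn; rewrite hft.
  by case: ifP => _; [rewrite abs0|exact: hN].
have [M' [K' [k' hd']]] := dom_exists hnft (ex_intro _ j0 hj0).
rewrite (Kidx_dom hd') (kidx_dom hd').
have M'0 := dM hd'.
have hK'K : K' != K.
  apply/eqP => e; have := dK hd'; rewrite e hft eqxx abs0 => e2; by move: M'0; rewrite -e2 ltxx.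
have hk'K : k' != K.
  apply/eqP => e; have := dk hd'; rewrite e hft eqxx abs0 => e2; by move: M'0; rewrite -e2 ltxx.
set m := Num.max (Num.max `|K| `|K'|) (Num.max `|k'| 1).
have bK : `|k1 * K| <= B%:Z * m by apply: ar_Bx => //; exact: ar_m1.
have bK' : `|k1 * K'| <= B%:Z * m by apply: ar_Bx => //; exact: ar_m2.
have bk' : `|k1 * k'| <= B%:Z * m by apply: ar_Bx => //; exact: ar_m3.
have bk2 : `|k2| <= B%:Z * m by apply: ar_k2 => //; exact: ar_m4.
case: (eqVneq (k1 * K) k2) => hk2; last first.
  have hn0 : absF (aser absF f k1 k2 b (k1 * K)) = 1.
    by rewrite ea (negbTE hk2) subr0 /c cp_mul.
  apply: le_trans (@span_gen _ _ _ _ (Num.min (k1*K) k2) (Num.max (k1*K) k2) (k1 * K) ha _ _) _.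
  - exact: ar_in2.
  - move=> n hn; rewrite hn0 ea.
    have /andP[hnk hnk2] := ar_out2 hn.
    rewrite (negbTE hnk2) subr0.
    rewrite /c; case: (cp_cases f n hk1) => [->|[j [ej ->]]]; first by rewrite abs0 ltr01.
    apply: hfj; by apply: contra hnk => /eqP hj; rewrite ej hj.
  - exact: ar_span2.
set d := f K - b.
set n0 := if M' <= absF d then k2 else k1 * K'.
have hk1K' : k1 * K' != k2 by rewrite -hk2; exact: neqM.
have hn0 : M' <= absF (aser absF f k1 k2 b n0).
  rewrite /n0; case: ifP => h.
    by rewrite ea eqxx /c -hk2 cp_mul.
  by rewrite ea (negbTE hk1K') subr0 /c cp_mul // -(dK hd') hft (negbTE hK'K).
have hkK' := dom_kK hd'.
apply: le_trans (@span_gen _ _ _ _ (Num.min k2 (Num.min (k1*k') (k1*K')))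
     (Num.max k2 (Num.max (k1*k') (k1*K'))) n0 ha _ _) _.
- by apply: ar_in3; rewrite /n0; case: ifP => _; rewrite eqxx ?orbT.
- move=> n hn; apply: lt_le_trans hn0; rewrite ea.
  have hnk2 := ar_out3 hn.
  rewrite (negbTE hnk2) subr0.
  rewrite /c; case: (cp_cases f n hk1) => [->|[j [ej ->]]]; first by rewrite abs0.
  have hjK : j != K by apply: contra hnk2 => /eqP hj; by rewrite ej hj hk2.
  have -> : f j = ftilde absF f j by rewrite hft (negbTE hjK).
  case: (ltP j k') => h1; first exact: dltk hd' _ h1.
  case: (ltP K' j) => h2; first exact: dgtK hd' _ h2.
  have := @between k1 j k' K'; rewrite h1 h2 => /(_ isT).
  move: hn ej; clear; lia.
- exact: ar_span3.
Qed.

Lemma cf_ge0 f M K k : dom f M K k -> 0 <= cf absF f.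
Proof.
move=> hf; have hkK := dom_kK hf.
rewrite /cf (norm1_dom hf) (Kidx_dom hf) (kidx_dom hf).
case: ifP => _; first by move: hkK; clear; lia.
case: ifP => _ //; case: ifP => _; first by clear; lia.
by case: ifP => _; clear; lia.
Qed.

Lemma P_zero zs : foldr (@mulXsub F) (fun _ => 0) zs = (fun _ => 0).
Proof. elim: zs => //= z zs ->; by apply: funext => n; rewrite /mulXsub mulr0 subr0. Qed.
End S.

Theorem mainTheorem2 (R : realType) (F : closedFieldType) (absF : F -> R)
  (Habs : nonarch_abs absF) (Hcomp : complete_abs absF)
  (f : int -> F) (Hnull : coef_null absF f) (Hnz : exists j, f j != 0)
  (k1 k2 : int) (Hk : (k1 != 0) || (k2 != 0))
  (B : nat) (HB : (0 < B)%N) (Hk1 : `|k1| <= B%:Z) (Hk2 : `|k2| <= B%:Z)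
  (b : F) (Hb : absF b = 1) :
  aser absF f k1 k2 b = (fun _ => 0)
  \/ forall (s : seq F) (m : F -> nat),
       uniq s ->
       (forall z, z \in s -> absF z = 1 /\ mult_ge absF (aser absF f k1 k2 b) z (m z)) ->
       ((\sum_(z <- s) m z)%:Z <= cf absF f * B%:Z).
Proof.
have [M [K [k hf]]] := dom_exists Habs Hnull Hnz.
case: (pselect (aser absF f k1 k2 b = (fun _ => 0))) => ha0; [by left|right].
move=> s m.
case: s => [|z0 s] hu hs.
  rewrite big_nil; apply: mulr_ge0 => //; exact: cf_ge0 hf.
have [zs [g [hg ea hsz hzs _]]] := factor Habs hu hs.
have hgnz : exists n, g n != 0.
  case: (pselect (exists n, g n != 0)) => // hno; exfalso; apply: ha0.
  rewrite ea; have -> : g = (fun _ => 0) by apply: funext => n; apply/eqP/negPn/negP => hne; apply: hno; exists n.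
  by rewrite P_zero.
have [Mg [Kg [kg hdg]]] := dom_exists Habs hg hgnz.
have hda := dom_P Habs hzs hdg; rewrite -ea in hda.
have hkg := dom_kK hdg.
have hle : Kg + (size zs)%:Z - kg <= cf absF f * B%:Z.
  case: (eqVneq k1 0) => hk10.
    subst k1; have hk2 : k2 != 0 by move: Hk; rewrite eqxx.
    have := bound0 Habs Hcomp Hnull hf hk2 Hk2 Hb hda. exact.
  have := bound1 Habs Hnull hf hk10 Hk1 Hk2 Hb hda. exact.
apply: le_trans hle; rewrite -hsz; move: hkg; clear; lia.
Qed.
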